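(* Let $n=2^k$ and let $G$ be a random graph drawn from $\mathcal G(n,\tfrac12)$ on vertex set $\{0,1\}^k$. Then with probability tending to $1$ as $n\to\infty$, the following property P holds: for every $U\subseteq V(G)$ with $|U|\le \tfrac13 k$ and every pattern $p$ with $|p|\le\tfrac13 k$, there is at least one vertex in $N(U)$ consistent with $p$.
   Context: $\mathcal G(n,\tfrac12)$: each pair of vertices is an edge independently with probability $1/2$. Vertices are identified with binary strings $v=v_1\cdots v_k$. A pattern is a string $p=p_1\cdots p_k\in\{*,0,1\}^k$; $p$ is consistent with vertex $v$ if for every $i$, $p_i=v_i$ or $p_i=*$; $|p|$ is the number of positions with $p_i\in\{0,1\}$. For $v\in V(G)$, $N(v)=\{u:\{u,v\}\in E(G)\}$, and for $U\subseteq V(G)$, $N(U)=\bigcap_{v\in U}N(v)$ (the common neighbours of all vertices of $U$; for $U=\emptyset$ this is $V(G)$). *)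

(* Defs.v *)
From mathcomp Require Import all_boot.
From Stdlib Require Import Reals.

Set Implicit Arguments.
Unset Strict Implicit.
Unset Printing Implicit Defensive.

Definition vertex (k : nat) := {ffun 'I_k -> bool}.

Definition pairs (k : nat) : {set {set vertex k}} :=
  [set e : {set vertex k} | #|e| == 2].

Definition is_graph (k : nat) (E : {set {set vertex k}}) : bool :=
  E \subset pairs k.

Definition adj (k : nat) (E : {set {set vertex k}}) (u v : vertex k) : bool :=
  [set u; v] \in E.

(* N(U) = common neighbours of all vertices of U (= V(G) for U empty). *)
Definition commonN (k : nat) (E : {set {set vertex k}}) (U : {set vertex k})
  : {set vertex k} :=
  [set w | [forall u in U, adj E u w]].

(* Patterns p in {*,0,1}^k: None = *, Some b = b. *)
Definition pattern (k : nat) := {ffun 'I_k -> option bool}.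

Definition consistent (k : nat) (p : pattern k) (v : vertex k) : bool :=
  [forall i, (p i == None) || (p i == Some (v i))].

Definition psize (k : nat) (p : pattern k) : nat :=
  #|[set i | p i != None]|.

(* Property P ( |U| <= k/3 and |p| <= k/3, written as 3|U| <= k, 3|p| <= k ). *)
Definition propP (k : nat) (E : {set {set vertex k}}) : bool :=
  [forall U : {set vertex k}, (3 * #|U| <= k) ==>
    [forall p : pattern k, (3 * psize p <= k) ==>
      [exists v, (v \in commonN E U) && consistent p v]]].

(* In G(n,1/2) every labelled graph on the n vertices has probability
   2^-(#pairs), so the probability of P is a ratio of counts. *)
Definition probP (k : nat) : R :=
  (INR #|[set E : {set {set vertex k}} | is_graph E && propP E]|
   / INR (2 ^ #|pairs k|))%R.

(* Main.v *)
Require Import Defs.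
From mathcomp Require Import all_boot.
From Stdlib Require Import Reals.
From Stdlib Require Import Lra.
From mathcomp Require Import all_boot zify.
Set Implicit Arguments. Unset Strict Implicit. Unset Printing Implicit Defensive.

Ltac btauto := repeat (match goal with |- context [?x \in ?A] => case: (x \in A) end); auto.

Lemma split_count (T : finType) (X : {set {set T}}) (S : {set T}) :
  (forall E F, E :\: S = F :\: S -> (E \in X) = (F \in X)) ->
  #|X| = #|[set E in X | S \subset E]| * 2 ^ #|S|.
Proof.
move=> inv.
pose phi := fun E : {set T} => (E :|: S, E :&: S).
have inj : {in X &, injective phi}.
  move=> E F _ _ [h1 h2].
  have -> : E = ((E :|: S) :\: S) :|: (E :&: S).
    by apply/setP=> x; rewrite !inE; btauto.
  rewrite h1 h2; apply/setP=> x; rewrite !inE; btauto.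
rewrite -(card_in_imset inj) -card_powerset -cardsX; apply: eq_card; case=> F T0.
rewrite !inE /=; apply/imsetP/idP.
- move=> [E EX [-> ->]]; rewrite subsetUr subsetIr andbT andbT.
  rewrite (inv _ E) //; apply/setP=> x; rewrite !inE; btauto.
- move=> /andP [/andP [FX SF] TS]; exists ((F :\: S) :|: T0).
  + rewrite (inv _ F) //; apply/setP=> x; rewrite !inE.
    move: (subsetP TS x); btauto => h; by rewrite h.
  + rewrite /phi; congr pair; apply/setP=> x; rewrite !inE;
    move: (subsetP TS x) (subsetP SF x); btauto => h1 h2;
    try (by rewrite h1); by rewrite h2.
Qed.

Section Bad.
Variable T : finType.
Definition P2 : {set {set T}} := [set e : {set T} | #|e| == 2].
Definition Bad (U W : {set T}) : {set {set {set T}}} :=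
  [set E : {set {set T}} | (E \subset P2) &&
     [forall w in W, exists u in U, [set u; w] \notin E]].

Lemma setD_in (E F S : {set {set T}}) x : E :\: S = F :\: S -> x \notin S ->
  (x \in E) = (x \in F).
Proof.
move=> h xS; have := congr1 (fun A : {set {set T}} => x \in A) h; rewrite /= !inE xS //.
Qed.

Lemma bad_count (U : {set T}) n : forall W : {set T}, #|W| = n -> [disjoint U & W] ->
  #|Bad U W| * (2 ^ #|U|) ^ n = 2 ^ #|P2| * (2 ^ #|U| - 1) ^ n.
Proof.
elim: n => [|n IH] W cW dUW.
  have -> : W = set0 by apply/eqP; rewrite -cards_eq0 cW.
  rewrite !expn0 !muln1 -card_powerset; apply: eq_card => E.
  rewrite !inE; case: (E \subset P2) => //=; apply/forallP => w; by rewrite inE.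
have /set0Pn [w wW] : W != set0 by rewrite -cards_eq0 cW.
set W' := W :\ w.
have cW' : #|W'| = n by move: cW; rewrite (cardsD1 w) wW; case.
have dUW' : [disjoint U & W'].
  apply: disjointWr dUW; exact: subsetDl.
have wU : w \notin U by rewrite (disjointFl dUW wW).
set Sw := [set [set u; w] | u in U].
have cSw : #|Sw| = #|U|.
  apply: card_in_imset => u v uU vU h.
  have : u \in [set v; w] by rewrite -h !inE eqxx.
  rewrite !inE => /orP [/eqP //|/eqP euw]; by move: wU; rewrite -euw uU.
have SwP : Sw \subset P2.
  apply/subsetP => e /imsetP [u uU ->]; rewrite inE cards2.
  case: (u =P w) => // euw; by move: wU; rewrite -euw uU.
have notSw : forall u w', w' \in W' -> [set u; w'] \notin Sw.
  move=> u w' w'W'; apply/imsetP => [[v vU h]].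
  have : w' \in [set v; w] by rewrite -h !inE eqxx orbT.
  rewrite !inE => /orP [/eqP ew'v|/eqP ew'w].
  - by move: (disjointFl dUW' w'W'); rewrite ew'v vU.
  - by move: w'W'; rewrite ew'w !inE eqxx.
have inv : forall E F, E :\: Sw = F :\: Sw -> (E \in Bad U W') = (F \in Bad U W').
  move=> E F h; rewrite !inE.
  have sub : forall G : {set {set T}}, (G \subset P2) = (G :\: Sw \subset P2).
    move=> G; apply/subsetP/subsetP => hG x.
    - by rewrite inE => /andP [_]; apply: hG.
    - move=> xG; case xS: (x \in Sw); first by apply: (subsetP SwP).
      by apply: hG; rewrite inE xS.
  rewrite sub h -sub; congr andb.
  apply: eq_forallb => w'; case w'W: (w' \in W') => //=.
  apply: eq_existsb => u; rewrite (@setD_in E F Sw _ h) //; exact: notSw.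
have eqB : Bad U W = [set E in Bad U W' | ~~ (Sw \subset E)].
  apply/setP => E; rewrite !inE -andbA; congr andb.
  have -> : (~~ (Sw \subset E)) = [exists u in U, [set u; w] \notin E].
    apply/negP/existsP.
    - move=> h; apply/existsP; apply: contraNT (introT negP h) => /existsPn h2.
      by apply/subsetP => e /imsetP [u uU ->]; move: (h2 u); rewrite uU /= negbK.
    - move=> [u /andP [uU ne]] /subsetP h; move: ne; rewrite h //; exact: imset_f.
  apply/forallP/andP.
  - move=> h; split.
    + apply/forallP => w'; apply/implyP => w'W; move: (h w'); rewrite (subsetP (subsetDl W [set w])) //.
    + by move: (h w); rewrite wW.
  - move=> [/forallP h1 h2] w'; apply/implyP => w'W.
    case: (w' =P w) => [-> //|ne]; move: (h1 w'); rewrite !inE w'W andbT.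
    by move/eqP: ne => ->.
have key := split_count inv.
rewrite eqB.
have -> : [set E in Bad U W' | ~~ (Sw \subset E)] = Bad U W' :\: [set E in Bad U W' | Sw \subset E].
  apply/setP => E; rewrite !inE; case: (Sw \subset E); rewrite ?andbT ?andbF ?andNb //=.
rewrite cardsDS; last by apply/subsetP => E; rewrite inE => /andP [].
move: (IH W' cW' dUW') key; rewrite cSw.
set a := 2 ^ #|U|; set X := #|Bad U W'|; set Y := #|[set E in _ | _]|.
move=> hX hk; rewrite !expnS.
have a1 : 0 < a by rewrite expn_gt0.
rewrite mulnA.
have -> : (X - Y) * a = (a - 1) * X by rewrite hk; nia.
by rewrite -mulnA hX mulnCA.
Qed.
End Bad.

Lemma expn_mono m n e : m <= n -> m ^ e <= n ^ e.
Proof. move=> h; elim: e => [|e IH]; rewrite ?expn0 // !expnS; exact: leq_mul. Qed.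

Lemma bern x n : x ^ n.+1 + n.+1 * x ^ n <= (x + 1) ^ n.+1.
Proof.
elim: n => [|n IH]; first by rewrite !expn1 expn0; lia.
rewrite [(x+1) ^ _]expnS.
apply: leq_trans (leq_mul (leqnn (x+1)) IH).
rewrite !expnS; nia.
Qed.

Lemma half_bound a : 0 < a -> 2 * (a - 1) ^ a <= a ^ a.
Proof.
move=> a0; case: a a0 => // b _.
have := bern b b; rewrite subn1 /= addn1.
have : b ^ b.+1 <= b.+1 * b ^ b by rewrite expnS leq_mul2r leqnSn orbT.
lia.
Qed.

Lemma decay a m t : 0 < a -> a * t <= m -> (a - 1) ^ m * 2 ^ t <= a ^ m.
Proof.
move=> a0 hm; rewrite -(subnKC hm) !expnD.
rewrite mulnAC; apply: leq_mul; last exact: expn_mono (leq_subr 1 a).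
rewrite !expnM -expnMn mulnC; apply: expn_mono; exact: half_bound.
Qed.

Lemma card_consistent k (p : pattern k) :
  #|[set v : vertex k | consistent p v]| = 2 ^ (k - psize p).
Proof.
pose F := fun i : 'I_k => if p i is Some b then pred1 b else predT.
have -> : #|[set v : vertex k | consistent p v]| = #|(family F : simpl_pred (vertex k))|.
  apply: eq_card => v; rewrite inE; apply/forallP/familyP => h i; move: (h i);
  rewrite /F; case: (p i) => [b|] //=.
  - by move/eqP=> [->]; rewrite inE.
  - by rewrite inE => /eqP ->.
rewrite card_family foldrE big_image /=.
rewrite (bigID (fun i => p i == None)) /=.
rewrite (eq_bigr (fun _ => 2)); last by move=> i /eqP; rewrite /F => ->; rewrite card_bool.
rewrite [X in _ * X](eq_bigr (fun _ => 1)); last first.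
  by move=> i; rewrite /F; case: (p i) => // b _; rewrite card1.
rewrite prod_nat_const prod_nat_const exp1n muln1; congr (2 ^ _).
have h := cardsC [set i | p i != None].
rewrite -[k in k - _](card_ord k) -h -/(psize p) addKn; apply: eq_card => i; rewrite !inE negbK //.
Qed.

Lemma card_small_sets (T : finType) j :
  #|[set U : {set T} | #|U| <= j]| <= (#|T|.+1) ^ j.
Proof.
pose g := fun f : {ffun 'I_j -> option T} => [set x | [exists i, f i == Some x]].
apply: leq_trans (_ : #|g @: [set: {ffun 'I_j -> option T}]| <= _).
  apply: subset_leq_card; apply/subsetP => U; rewrite inE => cU.
  apply/imsetP; exists [ffun i : 'I_j => nth None [seq Some x | x <- enum U] i]; first by rewrite inE.
  apply/setP => x; rewrite inE; apply/idP/existsP.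
  - move=> xU; have ix : index x (enum U) < j.
      by apply: leq_trans cU; rewrite cardE index_mem mem_enum.
    exists (Ordinal ix); rewrite ffunE /= (nth_map x); last by rewrite index_mem mem_enum.
    by rewrite nth_index ?mem_enum.
  - move=> [i]; rewrite ffunE; case: (ltnP i (size (enum U))) => hi.
    + by rewrite (nth_map x) // => /eqP [<-]; rewrite -mem_enum mem_nth.
    + by rewrite nth_default ?size_map.
apply: leq_trans (leq_imset_card _ _) _.
by rewrite cardsT card_ffun card_option card_ord.
Qed.

Lemma poly_exp j : 10 <= j -> 3 * j * j + 10 * j + 5 <= 2 ^ j.
Proof.
elim: j => // j IH; rewrite leq_eqVlt => /orP [/eqP <- //|h].
have := IH h; rewrite expnS; nia.
Qed.

Lemma arith k : 30 <= k ->
  ((2 ^ k).+1) ^ (k %/ 3) * 3 ^ k * 2 ^ (k %/ 3) <= 2 ^ (2 ^ (k %/ 3) - 1).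
Proof.
move=> hk; set j := k %/ 3.
have hj : 10 <= j by rewrite /j; lia.
have hkj : k <= 3 * j + 2 by rewrite /j; lia.
have e1 : (2 ^ k).+1 <= 2 ^ (3 * j + 3).
  apply: leq_trans (_ : 2 ^ k.+1 <= _); last by rewrite leq_exp2l //; lia.
  by rewrite expnS mul2n -addnn -addn1 leq_add2l expn_gt0.
have e2 : 3 ^ k <= 2 ^ (6 * j + 4).
  apply: leq_trans (@expn_mono 3 4 k isT) _.
  by rewrite (_ : 4 = 2 ^ 2) // -expnM leq_exp2l //; lia.
apply: leq_trans (_ : 2 ^ ((3 * j + 3) * j) * 2 ^ (6 * j + 4) * 2 ^ j <= _).
  rewrite leq_mul2r; apply/orP; right; apply: leq_mul e2.
  by rewrite expnM; apply: expn_mono.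
rewrite -!expnD leq_exp2l //; have := @poly_exp j hj; nia.
Qed.

Lemma card_bigcup_le (I T : finType) (P : pred I) (A : I -> {set T}) :
  #|\bigcup_(i | P i) A i| <= \sum_(i | P i) #|A i|.
Proof.
elim/big_rec2: _ => [|i S n _ h]; first by rewrite cards0.
apply: leq_trans (leq_card_setU _ _) _; by rewrite leq_add2l.
Qed.

Definition BadAll k := [set E : {set {set vertex k}} | is_graph E && ~~ propP E].
Definition GoodAll k := [set E : {set {set vertex k}} | is_graph E && propP E].

Lemma good_bad k : #|GoodAll k| + #|BadAll k| = 2 ^ #|pairs k|.
Proof.
rewrite -card_powerset -(cardsID [set E | propP E] (powerset (pairs k))).
congr (_ + _); apply: eq_card => E; rewrite !inE /is_graph; case: (propP E); rewrite ?andbT ?andbF //.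
Qed.

Lemma per_bound k (U : {set vertex k}) (p : pattern k) :
  3 * #|U| <= k -> 3 * psize p <= k ->
  #|[set E : {set {set vertex k}} | is_graph E &&
      ~~ [exists v, (v \in commonN E U) && consistent p v]]| * 2 ^ (2 ^ (k %/ 3) - 1)
  <= 2 ^ #|pairs k|.
Proof.
move=> hU hp.
set W := [set v | consistent p v] :\: U.
have dUW : [disjoint U & W].
  by rewrite disjoint_subset; apply/subsetP => v; rewrite !inE => ->.
have sub : [set E : {set {set vertex k}} | is_graph E &&
      ~~ [exists v, (v \in commonN E U) && consistent p v]] \subset Bad U W.
  apply/subsetP => E; rewrite !inE => /andP [gE /existsPn hE].
  apply/andP; split; first exact: gE.
  apply/forallP => w; apply/implyP; rewrite !inE => /andP [wU cw].
  move: (hE w); rewrite cw andbT inE negb_forall => /existsP [u].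
  by rewrite negb_imply => /andP [uU nadj]; apply/existsP; exists u; rewrite uU.
apply: leq_trans (leq_mul (subset_leq_card sub) (leqnn _)) _.
have := @bad_count _ U _ W (erefl _) dUW.
set a := 2 ^ #|U|; set m := #|W|; set B := #|Bad U W|.
move=> hB.
have a0 : 0 < a by rewrite expn_gt0.
have hm : a * (2 ^ (k %/ 3) - 1) <= m.
  have cW : 2 ^ (k - psize p) - #|U| <= m.
    rewrite /m /W cardsD -card_consistent leq_sub2l //.
    by apply: subset_leq_card; apply: subsetIr.
  have u2 : #|U| <= a by apply: ltnW; rewrite ltn_expl.
  have ej : 2 ^ (#|U| + k %/ 3) <= 2 ^ (k - psize p) by rewrite leq_exp2l //; lia.
  rewrite mulnBr muln1 /a -expnD; lia.
have := decay a0 hm => hd.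
have am : 0 < a ^ m by rewrite expn_gt0 a0.
rewrite -(leq_pmul2r am).
have e : B * a ^ m = 2 ^ #|pairs k| * (a - 1) ^ m := hB.
rewrite mulnAC e -mulnA; exact: leq_mul.
Qed.

Definition BadUP k (U : {set vertex k}) (p : pattern k) :=
  [set E : {set {set vertex k}} | is_graph E &&
      ~~ [exists v, (v \in commonN E U) && consistent p v]].

Lemma total_bound k :
  #|BadAll k| * 2 ^ (2 ^ (k %/ 3) - 1) <= ((2 ^ k).+1) ^ (k %/ 3) * 3 ^ k * 2 ^ #|pairs k|.
Proof.
set t := 2 ^ (2 ^ (k %/ 3) - 1).
set C := [set x : {set vertex k} * pattern k | (3 * #|x.1| <= k) && (3 * psize x.2 <= k)].
have sub : BadAll k \subset \bigcup_(x in C) BadUP x.1 x.2.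
  apply/subsetP => E; rewrite inE => /andP [gE].
  rewrite negb_forall => /existsP [U]; rewrite negb_imply => /andP [hU].
  rewrite negb_forall => /existsP [p]; rewrite negb_imply => /andP [hp hE].
  apply/bigcupP; exists (U, p); first by rewrite inE /= hU hp.
  by rewrite inE gE hE.
have h1 := leq_trans (subset_leq_card sub) (card_bigcup_le _ _).
apply: leq_trans (leq_mul h1 (leqnn t)) _.
rewrite big_distrl /=.
apply: leq_trans (_ : \sum_(x in C) 2 ^ #|pairs k| <= _).
  apply: leq_sum => -[U p]; rewrite inE /= => /andP [hU hp].
  exact: per_bound.
rewrite sum_nat_const leq_mul2r; apply/orP; right.
have hC : C \subset setX [set U : {set vertex k} | #|U| <= k %/ 3] [set: pattern k].
  apply/subsetP => -[U p]; rewrite !inE /= => /andP [hU _].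
  rewrite andbT; lia.
apply: leq_trans (subset_leq_card hC) _; rewrite cardsX.
apply: leq_mul.
  apply: leq_trans (card_small_sets _ _) _.
  by rewrite card_ffun card_bool card_ord.
by rewrite cardsT card_ffun card_option card_bool card_ord.
Qed.

Section RealPart.
Local Open Scope R_scope.
Lemma INR_muln m n : INR (m * n)%N = INR m * INR n.
Proof. by rewrite -mult_INR. Qed.
Lemma INR_addn m n : INR (m + n)%N = INR m + INR n.
Proof. by rewrite -plus_INR. Qed.
Lemma INR_expn m n : INR (m ^ n)%N = INR m ^ n.
Proof. elim: n => [|n IH]; first by rewrite expn0. by rewrite expnS INR_muln IH. Qed.
Lemma INR_leq m n : (m <= n)%N -> INR m <= INR n.
Proof. move/leP; exact: le_INR. Qed.

Lemma real_step (G B D j : nat) (eps : R) : (0 < D)%N -> (G + B)%N = D -> (B * 2 ^ j <= D)%N ->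
  Rabs ((1/2) ^ j) < eps -> R_dist (INR G / INR D) 1 < eps.
Proof.
move=> D0 hGB hB he.
have Dp : 0 < INR D by apply: lt_0_INR; apply/ltP.
have hG : INR G = INR D - INR B by rewrite -hGB INR_addn; ring.
have hB' := INR_leq hB; rewrite INR_muln INR_expn in hB'.
have p2 : 0 < INR 2 ^ j by apply: pow_lt; rewrite /=; lra.
have hh : (1/2) ^ j * INR 2 ^ j = 1.
  rewrite -Rpow_mult_distr (_ : 1/2 * INR 2 = 1); first exact: pow1.
  rewrite /=; field.
have Bp : 0 <= INR B by apply: pos_INR.
rewrite Rabs_pos_eq in he; last by apply: pow_le; lra.
rewrite /R_dist hG Rabs_left1.
- apply: Rle_lt_trans he.
  apply: (Rmult_le_reg_r (INR D * INR 2 ^ j)); first exact: Rmult_lt_0_compat.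
  have -> : - ((INR D - INR B) / INR D - 1) * (INR D * INR 2 ^ j) = INR B * INR 2 ^ j.
    field; lra.
  have -> : (1/2) ^ j * (INR D * INR 2 ^ j) = INR D.
    rewrite Rmult_comm Rmult_assoc (Rmult_comm (INR 2 ^ j)) hh; ring.
  exact: hB'.
- have : (INR D - INR B) / INR D <= 1.
    apply: (Rmult_le_reg_r (INR D)) => //.
    have -> : (INR D - INR B) / INR D * INR D = INR D - INR B by field; lra.
    lra.
  lra.
Qed.
End RealPart.

Lemma final_nat k : 30 <= k -> #|BadAll k| * 2 ^ (k %/ 3) <= 2 ^ #|pairs k|.
Proof.
move=> hk.
set t := 2 ^ (2 ^ (k %/ 3) - 1).
have t0 : 0 < t by rewrite expn_gt0.
rewrite -(leq_pmul2r t0) mulnAC.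
apply: leq_trans (leq_mul (total_bound k) (leqnn _)) _.
rewrite mulnAC (mulnC (2 ^ #|pairs k|) t) leq_mul2r; apply/orP; right.
exact: arith.
Qed.

Lemma powE m n : Nat.pow m n = expn m n.
Proof. elim: n => [|n IH]; first by rewrite expn0. by rewrite expnS -IH. Qed.

From Stdlib Require Import Reals.

Theorem mainTheorem5 : Un_cv probP 1%R.
Proof.
move=> eps eps0.
have h12 : Rlt (Rabs (Rdiv 1 2)) 1 by rewrite Rabs_pos_eq; lra.
have [N0 hN0] := @pow_lt_1_zero _ h12 eps eps0.
exists (3 * N0 + 30)%N => n hn.
move/leP: hn => hn.
rewrite /probP powE.
apply: (@real_step _ #|BadAll n| _ (n %/ 3)).
- by rewrite expn_gt0.
- exact: good_bad.
- apply: final_nat; lia.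
- apply: hN0; apply/leP; lia.
Qed.
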